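(* Let $\ell\ge5$, let $G$ be an $\ell$-holed graph, and let $(A,B,P_1,\dots,P_4)$ be a $4$-bar gate in $G$, where $P_i$ has ends $a_i\in V(A)$, $b_i\in V(B)$. Define $d(1,2,3,4)=d_A(a_1,a_2)+d_A(a_3,a_4)$, $d(1,3,2,4)=d_A(a_1,a_3)+d_A(a_2,a_4)$ and $d(1,4,2,3)=d_A(a_1,a_4)+d_A(a_2,a_3)$. Then two of $d(1,2,3,4),d(1,3,2,4),d(1,4,2,3)$ are equal and the third is at most one more.
   Context: A hole is an induced cycle of length at least four; $G$ is $\ell$-holed if all holes have length exactly $\ell$. $d_A$ denotes distance in $A$. A $4$-bar semigate in $G$ is a tuple $(A,B,P_1,\dots,P_4)$ of induced subgraphs such that: $A,B$ are vertex-disjoint connected subgraphs; each $P_i$ is a path with ends $a_i,b_i$, $V(P_i\cap A)=\{a_i\}$, $V(P_i\cap B)=\{b_i\}$; the $P_i$ are distinct and $V(P_i\cap P_j)=\{a_i,b_i\}\cap\{a_j,b_j\}$ for $i<j$; each vertex of $A$ has at most one neighbour in $V(B)$ and vice versa; and $A\cup B\cup P_1\cup\dots\cup P_4$ is induced. A semigate $(A',B',P'_1,\dots,P'_4)$ is strictly better than $(A,B,P_1,\dots,P_4)$ if $A'\subseteq A$, $B'\subseteq B$, $P_i\subseteq P'_i$ for all $i$, and $A'\ne A$ or $B'\ne B$. A $4$-bar gate is a $4$-bar semigate with no strictly better $4$-bar semigate. *)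

(* Defs.v *)
(* Finite simple graphs as a symmetric irreflexive relation on a finType. *)
From mathcomp Require Import all_boot.
Set Implicit Arguments. Unset Strict Implicit. Unset Printing Implicit Defensive.

Section Graphs.
Variables (T : finType) (e : rel T).

(* A hole: an induced cycle of length at least four, given by the cyclic
   sequence of its (distinct) vertices. *)
Definition is_hole (s : seq T) : Prop :=
  exists x0 : T, x0 \in s /\
  [/\ uniq s, 4 <= size s &
      forall i j, i < size s -> j < size s ->
        e (nth x0 s i) (nth x0 s j) =
          (i.+1 %% size s == j) || (j.+1 %% size s == i)].

Definition holed (l : nat) : Prop := forall s, is_hole s -> size s = l.

Definition is_path (P : {set T}) (a b : T) : Prop :=
  exists s : seq T,
    [/\ uniq (a :: s), P = [set x in a :: s], last a s = b &
        forall i j, i < j -> j < size (a :: s) ->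
          e (nth a (a :: s) i) (nth a (a :: s) j) = (j == i.+1)].

Definition rel_in (A : {set T}) : rel T :=
  [rel u v | [&& u \in A, v \in A & e u v]].

Definition connected_in (A : {set T}) : Prop :=
  A != set0 /\ {in A &, forall x y, connect (rel_in A) x y}.

(* d_A(x,y): least n such that there is a walk of length n from x to y in G[A]
   (defaults to #|T| if none exists; irrelevant when G[A] is connected). *)
Definition dist_in (A : {set T}) (x y : T) : nat :=
  find (fun n => [exists t : n.-tuple T, path (rel_in A) x t && (last x t == y)])
       (iota 0 #|T|).

Definition semigate (A B : {set T}) (P : 'I_4 -> {set T}) (a b : 'I_4 -> T) : Prop :=
  [/\ [disjoint A & B], connected_in A, connected_in B,
      (forall i, is_path (P i) (a i) (b i) /\
                 P i :&: A = [set a i] /\ P i :&: B = [set b i]) &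
      (forall i j, i != j -> P i != P j /\
                 P i :&: P j = [set a i; b i] :&: [set a j; b j])] /\
  [/\
      (forall x, x \in A -> #|[set y in B | e x y]| <= 1),
      (forall y, y \in B -> #|[set x in A | e y x]| <= 1) &
      (let U := A :|: B :|: \bigcup_i P i in
       forall u v, u \in U -> v \in U -> e u v ->
         [\/ u \in A /\ v \in A, u \in B /\ v \in B |
             exists i, u \in P i /\ v \in P i])].

Definition is_semigate (A B : {set T}) (P : 'I_4 -> {set T}) : Prop :=
  exists a b, semigate A B P a b.

Definition strictly_better (A' B' : {set T}) (P' : 'I_4 -> {set T})
    (A B : {set T}) (P : 'I_4 -> {set T}) : Prop :=
  [/\ A' \subset A, B' \subset B, (forall i, P i \subset P' i) &
      (A' != A \/ B' != B)].

Definition gate (A B : {set T}) (P : 'I_4 -> {set T}) (a b : 'I_4 -> T) : Prop :=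
  semigate A B P a b /\
  ~ (exists A' B' P', is_semigate A' B' P' /\ strictly_better A' B' P' A B P).

End Graphs.

Definition o1 : 'I_4 := @Ordinal 4 0 isT.
Definition o2 : 'I_4 := @Ordinal 4 1 isT.
Definition o3 : 'I_4 := @Ordinal 4 2 isT.
Definition o4 : 'I_4 := @Ordinal 4 3 isT.

(* Main.v *)
Require Import Defs.
From mathcomp Require Import all_boot.
From mathcomp Require Import zify.
Set Implicit Arguments. Unset Strict Implicit. Unset Printing Implicit Defensive.
Arguments dist_in : simpl never.

Section Dist.
Variables (T : finType) (e : rel T).
Hypothesis e_sym : symmetric e.

Definition walk (A : {set T}) x y n :=
  exists p : seq T, [/\ path (rel_in e A) x p, last x p = y & size p = n].

Lemma dist_le_walk A x p : path (rel_in e A) x p ->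
  dist_in e A x (last x p) <= size p.
Proof.
move=> hp; rewrite /dist_in.
case: (ltnP (size p) #|T|) => hs.
- rewrite leqNgt; apply/negP => hlt.
  have H := before_find 0 hlt; rewrite nth_iota // add0n in H.
  move/negbT: H => /existsPn /(_ (in_tuple p)).
  by rewrite /= hp eqxx.
- apply: leq_trans (find_size _ _) _; by rewrite size_iota.
Qed.

Lemma dist_le_card A x y : dist_in e A x y <= #|T|.
Proof. by rewrite /dist_in; apply: leq_trans (find_size _ _) _; rewrite size_iota. Qed.

Lemma dist_walk A x y : dist_in e A x y < #|T| -> walk A x y (dist_in e A x y).
Proof.
rewrite /dist_in.
set a := (fun n => [exists t : n.-tuple T, path (rel_in e A) x t && (last x t == y)]).
move=> h.
have hh : has a (iota 0 #|T|) by rewrite has_find size_iota.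
have := nth_find 0 hh.
rewrite nth_iota // add0n.
move=> /existsP [t /andP [hp /eqP hl]]; exists t; split => //; exact: size_tuple.
Qed.

Lemma dist_le A x y n : walk A x y n -> dist_in e A x y <= n.
Proof. by case=> p [hp <- <-]; exact: dist_le_walk. Qed.

Lemma dist_tri A x y z : dist_in e A x z <= dist_in e A x y + dist_in e A y z.
Proof.
case: (ltnP (dist_in e A x y) #|T|) => h1; last first.
  by apply: leq_trans (dist_le_card _ _ _) _; apply: leq_trans h1 (leq_addr _ _).
case: (ltnP (dist_in e A y z) #|T|) => h2; last first.
  by apply: leq_trans (dist_le_card _ _ _) _; apply: leq_trans h2 (leq_addl _ _).
case: (dist_walk h1) => p [hp hl hs]; case: (dist_walk h2) => q [hq hl' hs'].
apply: dist_le; exists (p ++ q); split.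
- by rewrite cat_path hp hl hq.
- by rewrite last_cat hl hl'.
- by rewrite size_cat hs hs'.
Qed.

Lemma dist_refl A x : dist_in e A x x = 0.
Proof. by apply/eqP; rewrite -leqn0; apply: (@dist_le_walk A x [::]). Qed.

Lemma rel_in_sym A : symmetric (rel_in e A).
Proof. by move=> x y; rewrite /rel_in /= e_sym andbCA. Qed.

Lemma last_rev_belast (x : T) p : last (last x p) (rev (belast x p)) = x.
Proof. case: p => [|z p]; first by []. by rewrite [belast _ _]/= rev_cons last_rcons. Qed.

Lemma walk_rev A x y n : walk A x y n -> walk A y x n.
Proof.
case=> p [hp hl hs]; exists (rev (belast x p)); split.
- rewrite -hl rev_path (@eq_path _ _ (rel_in e A)) // => a b /=; exact: rel_in_sym.
- by rewrite -hl last_rev_belast.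
- by rewrite size_rev size_belast.
Qed.

Lemma dist_sym A x y : dist_in e A x y = dist_in e A y x.
Proof.
suff H : forall a b, dist_in e A a b <= dist_in e A b a.
  by apply/eqP; rewrite eqn_leq !H.
move=> a b; case: (ltnP (dist_in e A b a) #|T|) => h.
  exact/dist_le/walk_rev/dist_walk.
exact: leq_trans (dist_le_card _ _ _) h.
Qed.

Lemma path_mono (A A' : {set T}) x p : A \subset A' -> path (rel_in e A) x p -> path (rel_in e A') x p.
Proof.
move=> sA; apply: sub_path => a b /and3P [ha hb hab].
by rewrite /rel_in /= (subsetP sA _ ha) (subsetP sA _ hb).
Qed.

Lemma dist_mono (A A' : {set T}) x y : A \subset A' -> dist_in e A' x y <= dist_in e A x y.
Proof.
move=> sA; case: (ltnP (dist_in e A x y) #|T|) => h.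
  case: (dist_walk h) => p [hp hl hs]; apply: dist_le; exists p; split => //.
  exact: path_mono hp.
exact: leq_trans (dist_le_card _ _ _) h.
Qed.

Lemma connect_mono (A A' : {set T}) x y : A \subset A' -> connect (rel_in e A) x y -> connect (rel_in e A') x y.
Proof.
move=> sA /connectP [p hp ->]; apply/connectP; exists p => //; exact: path_mono hp.
Qed.

Lemma connect_dist A x y : connect (rel_in e A) x y -> dist_in e A x y < #|T|.
Proof.
case/connectP => p hp ->; case: (shortenP hp) => p' hp' hu _.
apply: leq_ltn_trans (dist_le_walk hp') _.
have := uniq_leq_size hu (fun z _ => mem_enum T z).
by rewrite -cardE /=.
Qed.

Lemma connect_walk A x y : connect (rel_in e A) x y -> walk A x y (dist_in e A x y).
Proof. by move=> h; apply: dist_walk; exact: connect_dist. Qed.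

Lemma dist_eq0 A x y : connect (rel_in e A) x y -> dist_in e A x y = 0 -> x = y.
Proof. by move=> /connect_walk h h0; move: h; rewrite h0 => -[[|? ?] [_ hl hs]]. Qed.

Lemma dist_le1 A x y : rel_in e A x y -> dist_in e A x y <= 1.
Proof. by move=> h; apply: (@dist_le_walk A x [:: y]); rewrite /= h. Qed.

Lemma dist_ge2 A x y : connect (rel_in e A) x y -> x != y -> ~~ rel_in e A x y ->
  2 <= dist_in e A x y.
Proof.
move=> /connect_walk [p [hp hl hs]] hxy hr.
case: p hp hl hs => [|z [|z' p]] hp hl hs.
- by move: hl hxy => /= ->; rewrite eqxx.
- by move: hl hp => /= -> /andP [h _]; rewrite h in hr.
- by rewrite -hs.
Qed.

Definition lazy_rel A := fun a b => (a == b) || rel_in e A a b.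

Lemma lazy_dist A x p : path (lazy_rel A) x p -> dist_in e A x (last x p) <= size p.
Proof.
elim: p x => [|z p IH] x; first by rewrite dist_refl.
case/andP => /orP [/eqP <- | hr] hp.
  by apply: leq_trans (IH _ hp) _.
apply: leq_trans (dist_tri A x z _) _.
rewrite [size _]/= -add1n leq_add //; [exact: dist_le1 | exact: IH].
Qed.

Lemma lazy_connect A x p : path (lazy_rel A) x p -> connect (rel_in e A) x (last x p).
Proof.
elim: p x => [|z p IH] x; first by rewrite connect0.
case/andP => /orP [/eqP <- | hr] hp; first exact: IH.
apply: connect_trans (connect1 hr) (IH _ hp).
Qed.

End Dist.

Section Cut.
Variables (T : finType) (e : rel T).
Hypothesis e_sym : symmetric e.

Definition closedC (A : {set T}) v (C : {set T}) :=
  forall z w, z \in C -> w \in A -> e z w -> (w \in C) || (w == v).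
Definition connset (A : {set T}) :=
  forall x y, x \in A -> y \in A -> connect (rel_in e A) x y.

Variables (A C : {set T}) (v : T).
Hypotheses (vA : v \in A) (vC : v \notin C) (CA : C \subset A) (Cl : closedC A v C).

Lemma hits_v x p : path (rel_in e A) x p -> x \in C -> last x p \notin C -> v \in p.
Proof.
elim: p x => [|z p IH] x; first by move=> _ ->.
case/andP => /and3P [hx hz hxz] hp hxC hl.
case/orP: (Cl hxC hz hxz) => [hzC|/eqP ->]; last by rewrite inE eqxx.
by rewrite inE (IH z hp hzC hl) orbT.
Qed.

Lemma dist_add x y : x \in C -> y \notin C -> connect (rel_in e A) x y ->
  dist_in e A x y = dist_in e A x v + dist_in e A v y.
Proof.
move=> hx hy hc; apply/eqP; rewrite eqn_leq dist_tri /=.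
case: (connect_walk hc) => p [hp hl hs].
have hv : v \in p by apply: (hits_v hp hx); rewrite hl.
move: hp hl hs; case/path.splitP: hv => [p1 p2].
rewrite cat_path last_cat last_rcons size_cat => /andP [h1 h2] hl <-.
apply: leq_add; first by have := dist_le_walk h1; rewrite last_rcons.
by rewrite -hl; apply: dist_le_walk.
Qed.

Definition phi z := if z \in C then v else z.

Lemma proj_path x p : x \in A -> path (rel_in e A) x p ->
  path (lazy_rel e (A :\: C)) (phi x) (map phi p).
Proof.
elim: p x => [|z p IH] x //= hx /andP [/and3P [_ hz hxz] hp].
rewrite (IH z hz hp) andbT /lazy_rel /phi.
case: (boolP (x \in C)) => hxC; case: (boolP (z \in C)) => hzC.
- by rewrite eqxx.
- by case/orP: (Cl hxC hz hxz) => [h|/eqP ->]; [rewrite h in hzC | rewrite eqxx].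
- rewrite e_sym in hxz; by case/orP: (Cl hzC hx hxz) => [h|/eqP ->]; [rewrite h in hxC | rewrite eqxx].
- by rewrite /rel_in /= !inE hxC hzC hx hz hxz orbT.
Qed.

Lemma phi_id z : z \notin C -> phi z = z.
Proof. by rewrite /phi => /negbTE ->. Qed.

Lemma connset_diff : connset A -> connset (A :\: C).
Proof.
move=> hA x y; rewrite !inE => /andP [hxC hx] /andP [hyC hy].
case/connectP: (hA x y hx hy) => p hp hl.
have := lazy_connect (proj_path hx hp).
by rewrite last_map -hl !phi_id.
Qed.

Lemma dist_diff x y : x \in A :\: C -> y \in A :\: C -> connect (rel_in e A) x y ->
  dist_in e (A :\: C) x y = dist_in e A x y.
Proof.
move=> hx' hy' hc.
have hm : dist_in e A x y <= dist_in e (A :\: C) x y by apply: dist_mono; exact: subsetDl.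
apply/eqP; rewrite eqn_leq hm andbT.
move: hx' hy'; rewrite !inE => /andP [hxC hx] /andP [hyC hy].
case: (connect_walk hc) => p [hp hl hs].
have := lazy_dist (proj_path hx hp).
by rewrite last_map hl size_map hs !phi_id.
Qed.

End Cut.

Lemma exit_edge (T : Type) (r : rel T) (P : pred T) x p :
  path r x p -> P x -> ~~ P (last x p) -> exists z w, [/\ P z, ~~ P w & r z w].
Proof.
elim: p x => [|y p IH] x; first by move=> _ ->.
case/andP => hxy hp hx hl.
case: (boolP (P y)) => hy; first exact: IH hp hy hl.
by exists x, y.
Qed.

Definition condN (s1 s2 s3 : nat) : Prop :=
  [\/ s1 = s2 /\ s3 <= s1 + 1, s1 = s3 /\ s2 <= s1 + 1 | s2 = s3 /\ s1 <= s2 + 1].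

Ltac solve_condN :=
  first [ apply: Or31; split; lia | apply: Or32; split; lia | apply: Or33; split; lia ].

Lemma condN_shift a b c k : condN a b c -> condN (k + a) (k + b) (k + c).
Proof. by case=> -[h1 h2]; solve_condN. Qed.

Lemma in_set4 (T : finType) (a b c d y : T) : y \in [set a; b; c; d] -> [\/ y = a, y = b, y = c | y = d].
Proof.
rewrite !inE => h.
by case/orP: h => [/orP [/orP [/eqP|/eqP] | /eqP] | /eqP]; [constructor 1|constructor 2|constructor 3|constructor 4].
Qed.
Lemma in_set4r (T : finType) (a b c d y : T) : [\/ y = a, y = b, y = c | y = d] -> y \in [set a; b; c; d].
Proof. by case=> ->; rewrite !inE eqxx ?orbT. Qed.

Section Core.
Variables (T : finType) (e : rel T).
Hypothesis e_sym : symmetric e.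
Hypothesis e_irr : irreflexive e.

Definition PP A x1 x2 x3 x4 :=
  condN (dist_in e A x1 x2 + dist_in e A x3 x4) (dist_in e A x1 x3 + dist_in e A x2 x4)
        (dist_in e A x1 x4 + dist_in e A x2 x3).

Definition Mprop (A S : {set T}) :=
  forall A' : {set T}, A' \subset A -> S \subset A' -> connset e A' -> A' = A.

Lemma connect_symA (A : {set T}) x y : connect (rel_in e A) x y = connect (rel_in e A) y x.
Proof. apply: sym_connect_sym; exact: rel_in_sym. Qed.

Lemma red_data (A C S S' : {set T}) v x : connset e A -> v \in A -> v \notin C -> C \subset A ->
  closedC e A v C -> connset e C -> x \in C -> Mprop A S -> S \subset S' :|: C -> v \in S' ->
  Mprop (A :\: C) S'.
Proof.
move=> hA vA vC CA Cl hC xC M SS vS A'' sA'' sS' hA''.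
have [z [w [zC wC /and3P [zA wA ezw]]]] : exists z w, [/\ z \in C, w \notin C & rel_in e A z w].
  case/connectP: (hA x v (subsetP CA _ xC) vA) => p hp hl.
  by apply: (exit_edge hp xC); rewrite -hl.
have wv : w = v by case/orP: (Cl _ _ zC wA ezw) => [h|/eqP //]; rewrite h in wC.
subst w.
have vA'' : v \in A'' by apply: (subsetP sS').
set A3 := A'' :|: C.
have s3 : A3 \subset A.
  apply/subsetP => y; rewrite !inE => /orP [/(subsetP sA'')|/(subsetP CA)] //.
  by rewrite inE => /andP [].
have toV : forall y, y \in A3 -> connect (rel_in e A3) y v.
  move=> y; rewrite inE => /orP [yA|yC].
    by apply: (connect_mono (subsetUl A'' C)); apply: hA''.
  apply: connect_trans (connect_mono (subsetUr A'' C) (hC y z yC zC)) _.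
  by apply: connect1; rewrite /rel_in /= !inE zC vA'' ezw orbT.
have c3 : connset e A3.
  move=> y1 y2 h1 h2; apply: connect_trans (toV _ h1) _.
  by rewrite connect_symA; apply: toV.
have e3 : A3 = A.
  apply: M => //; apply: subset_trans SS _.
  by apply/subsetP => y; rewrite !inE => /orP [/(subsetP sS')->|->]; rewrite ?orbT.
apply/eqP; rewrite eqEsubset sA'' /=; apply/subsetP => y; rewrite !inE => /andP [yC yA].
by move: yA; rewrite -e3 inE (negbTE yC) orbF.
Qed.

Lemma red_card (A C : {set T}) x : x \in C -> C \subset A -> #|A :\: C| < #|A|.
Proof.
move=> xC CA; apply: proper_card; rewrite properEneq subsetDl andbT.
apply/eqP => h; have := subsetP CA _ xC; rewrite -h inE xC.
by [].
Qed.

Lemma reduce_step (A C : {set T}) v x y1 y2 y3 :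
  (forall (A' : {set T}) z1 z2 z3 z4, #|A'| < #|A| -> connset e A' -> z1 \in A' -> z2 \in A' -> z3 \in A' ->
     z4 \in A' -> Mprop A' [set z1; z2; z3; z4] -> PP A' z1 z2 z3 z4) ->
  connset e A -> v \in A -> v \notin C -> C \subset A -> closedC e A v C -> connset e C ->
  x \in C -> y1 \notin C -> y2 \notin C -> y3 \notin C -> y1 \in A -> y2 \in A -> y3 \in A ->
  Mprop A [set x; y1; y2; y3] -> PP A x y1 y2 y3.
Proof.
move=> IH hA vA vC CA Cl hC xC n1 n2 n3 a1 a2 a3 M.
have hA' : connset e (A :\: C) := connset_diff e_sym Cl hA.
have inD : forall y, y \notin C -> y \in A -> y \in A :\: C by move=> y h1 h2; rewrite inE h1 h2.
have M' : Mprop (A :\: C) [set v; y1; y2; y3].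
  apply: (red_data hA vA vC CA Cl hC xC M); last by rewrite !inE eqxx.
  apply/subsetP => y /in_set4 [] ->; by rewrite !inE ?eqxx ?xC ?orbT.
have := IH _ v y1 y2 y3 (red_card xC CA) hA' (inD _ vC vA) (inD _ n1 a1) (inD _ n2 a2)
  (inD _ n3 a3) M'.
have dd : forall a b, a \notin C -> b \notin C -> a \in A -> b \in A ->
   dist_in e (A :\: C) a b = dist_in e A a b.
  by move=> a b h1 h2 h3 h4; apply: (dist_diff e_sym Cl (inD _ h1 h3) (inD _ h2 h4)); apply: hA.
have da : forall b, b \notin C -> b \in A -> dist_in e A x b = dist_in e A x v + dist_in e A v b.
  by move=> b h1 h2; apply: (dist_add Cl xC h1); apply: hA => //; apply: (subsetP CA).
rewrite /PP (dd v y1) // (dd y2 y3) // (dd v y2) // (dd y1 y3) // (dd v y3) // (dd y1 y2) //.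
rewrite (da y1) // (da y2) // (da y3) // -!addnA; exact: condN_shift.
Qed.

End Core.

Definition dd (b : bool) := if b then 1 else 2.

Lemma base_bool (b12 b13 b14 b23 b24 b34 : bool) :
  (b12 || b13) && (b12 || b14) && (b13 || b14) && (b12 || b23) && (b12 || b24) && (b23 || b24)
  && (b13 || b23) && (b13 || b34) && (b23 || b34) && (b14 || b24) && (b14 || b34) && (b24 || b34) ->
  ~~ (b12 && b23 && b34 && b14 && ~~ b13 && ~~ b24) ->
  ~~ (b13 && b23 && b24 && b14 && ~~ b12 && ~~ b34) ->
  ~~ (b12 && b24 && b34 && b13 && ~~ b14 && ~~ b23) ->
  condN (dd b12 + dd b34) (dd b13 + dd b24) (dd b14 + dd b23).
Proof.
by case: b12; case: b13; case: b14; case: b23; case: b24; case: b34 => //= _ _ _ _;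
  first [by apply: Or31 | by apply: Or32 | by apply: Or33].
Qed.

Section Comp.
Variables (T : finType) (e : rel T).
Hypothesis e_sym : symmetric e.
Hypothesis e_irr : irreflexive e.

Definition comp (A : {set T}) v x := [set z in A :\ v | connect (rel_in e (A :\ v)) x z].

Variables (A : {set T}) (v : T).

Lemma comp_sub x : comp A v x \subset A.
Proof. by rewrite /comp; apply/subsetP => z; rewrite !inE => /andP [/andP [_ ->]]. Qed.

Lemma comp_v x : v \notin comp A v x.
Proof. by rewrite /comp !inE eqxx. Qed.

Lemma comp_x x : x \in A :\ v -> x \in comp A v x.
Proof. by move=> h; rewrite /comp inE h connect0. Qed.

Lemma comp_closed x : closedC e A v (comp A v x).
Proof.
rewrite /comp; move=> z w; rewrite !inE => /andP [/andP [zv zA] cz] wA ezw.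
case: (eqVneq w v) => [->|wv]; first by rewrite orbT.
rewrite wA /= orbF; apply: connect_trans cz (connect1 _).
by rewrite /rel_in /= !inE zv zA wv wA ezw.
Qed.

Lemma comp_conn x : connset e (comp A v x).
Proof.
rewrite /comp; move=> y z; rewrite !inE => /andP [hy cy] /andP [hz cz].
have : connect (rel_in e (A :\ v)) y z.
  by apply: connect_trans _ cz; rewrite connect_symA.
case/connectP => p hp ->; apply/connectP; exists p => //.
elim: p y hy cy hp {hz cz} => [|w p IH] y hy cy //= /andP [hr hp].
have cw : connect (rel_in e (A :\ v)) x w := connect_trans cy (connect1 hr).
move: (hr) => /and3P [_ hw ew]; rewrite !inE in hw.
rewrite (IH w hw cw hp) andbT /rel_in /= !inE.
by rewrite hy hw cy cw ew.
Qed.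

Lemma comp_disj x y z : y \in A :\ v -> z \in comp A v x -> z \in comp A v y -> y \in comp A v x.
Proof.
rewrite /comp; move=> hy; rewrite !inE => /andP [_ cx] /andP [_ cy].
rewrite !inE in hy; rewrite hy /=; apply: connect_trans cx _; by rewrite connect_symA.
Qed.

Lemma comp_term (S : {set T}) x : Mprop e A S -> connset e A -> S \subset A ->
  x \in A :\ v -> (forall s, s \in S -> s \notin comp A v x) -> False.
Proof.
move=> M hA SA hx hS.
have h := M (A :\: comp A v x) (subsetDl _ _).
have := comp_x hx; move: (hx); rewrite inE => /andP [_ xA].
have e1 : A :\: comp A v x = A.
  apply: h; last exact: (connset_diff e_sym (@comp_closed x) hA).
  apply/subsetP => s sS; rewrite inE hS //=; exact: (subsetP SA).
by move: xA; rewrite -{1}e1 inE => /andP [/negbTE ->].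
Qed.

End Comp.

Lemma isolated (T : finType) (e : rel T) (A : {set T}) a b :
  (forall u, u \in A -> ~~ e a u) -> connect (rel_in e A) a b -> b = a.
Proof.
move=> hn /connectP [[|c p] hp ->] //.
by move: hp => /= /andP [/and3P [_ hc hac] _]; rewrite (negbTE (hn c hc)) in hac.
Qed.

Section Main.
Variables (T : finType) (e : rel T).
Hypothesis e_sym : symmetric e.
Hypothesis e_irr : irreflexive e.
Definition noC4 := forall x y z w : T, x != z -> y != w -> e x y -> e y z -> e z w -> e w x ->
  ~~ e x z -> ~~ e y w -> False.
Hypothesis hC4 : noC4.

Lemma Mprop_sup (A S S' : {set T}) : Mprop e A S -> S \subset S' -> Mprop e A S'.
Proof. by move=> M sS A' h1 h2 h3; apply: M => //; apply: subset_trans sS h2. Qed.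

Lemma deg (A : {set T}) a b c w : connset e (A :\ w) -> a \in A -> b \in A -> a != w -> b != w ->
  a != b -> (forall u, u \in A -> [\/ u = a, u = b, u = c | u = w]) -> e a b || e a c.
Proof.
move=> hc aA bA aw bw ab hs; apply/negPn/negP; rewrite negb_or => /andP [nab nac].
have hi : forall u, u \in A :\ w -> ~~ e a u.
  move=> u; rewrite !inE => /andP [uw /hs [] hu]; subst u => //.
  - by rewrite e_irr.
  - by rewrite eqxx in uw.
have := isolated hi (hc a b _ _); rewrite !inE aA bA aw bw => /(_ isT isT) h.
by rewrite h eqxx in ab.
Qed.

Lemma dist12 (A : {set T}) a b c : connset e A -> a \in A -> b \in A -> c \in A -> a != b ->
  (~~ e a b -> e a c && e c b) -> dist_in e A a b = dd (e a b).
Proof.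
move=> hA aA bA cA ab hc; rewrite /dd; case E: (e a b).
- apply/eqP; rewrite eqn_leq dist_le1 /=; last by rewrite /rel_in /= aA bA E.
  rewrite lt0n; apply/eqP => h0; have := dist_eq0 (hA a b aA bA) h0.
  by move=> h; rewrite h eqxx in ab.
- have /andP [eac ecb] := hc (negbT E).
  apply/eqP; rewrite eqn_leq; apply/andP; split.
    have := @dist_le_walk _ e A a [:: c; b]; apply.
    by rewrite /= /rel_in /= aA cA bA eac ecb.
  apply: (dist_ge2 (hA a b aA bA) ab).
  by rewrite /rel_in /= E !andbF.
Qed.


Ltac degi D Asub w := apply: (D _ _ _ w) => //; try (by rewrite eq_sym);
  try (by move=> u /Asub [] ->; first [by constructor 1 | by constructor 2 | by constructor 3 | by constructor 4]).

Lemma base (A : {set T}) x1 x2 x3 x4 : connset e A -> x1 \in A -> x2 \in A -> x3 \in A -> x4 \in A ->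
  Mprop e A [set x1; x2; x3; x4] -> (forall w, w \in A -> connset e (A :\ w)) ->
  PP e A x1 x2 x3 x4.
Proof.
move=> hA a1 a2 a3 a4 M hcut.
have s12 := dist_sym e_sym A x1 x2. have s13 := dist_sym e_sym A x1 x3.
have s14 := dist_sym e_sym A x1 x4. have s23 := dist_sym e_sym A x2 x3.
have s24 := dist_sym e_sym A x2 x4. have s34 := dist_sym e_sym A x3 x4.
rewrite /PP.
case: (eqVneq x1 x2) => [e12|n12].
  subst x2; rewrite dist_refl; have ? := dist_tri e A x3 x1 x4; solve_condN.
case: (eqVneq x1 x3) => [e13|n13].
  subst x3; rewrite dist_refl; have ? := dist_tri e A x2 x1 x4; solve_condN.
case: (eqVneq x1 x4) => [e14|n14].
  subst x4; rewrite dist_refl; have ? := dist_tri e A x2 x1 x3; solve_condN.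
case: (eqVneq x2 x3) => [e23|n23].
  subst x3; rewrite dist_refl; have ? := dist_tri e A x1 x2 x4; solve_condN.
case: (eqVneq x2 x4) => [e24|n24].
  subst x4; rewrite dist_refl; have ? := dist_tri e A x1 x2 x3; solve_condN.
case: (eqVneq x3 x4) => [e34|n34].
  subst x4; rewrite dist_refl; have ? := dist_tri e A x1 x3 x2; solve_condN.
have Asub : forall w, w \in A -> [\/ w = x1, w = x2, w = x3 | w = x4].
  move=> w wA; case: (boolP (w \in [set x1; x2; x3; x4])) => [/in_set4 //|wS].
  exfalso.
  have h := M (A :\ w) (subsetDl _ _).
  have : A :\ w = A.
    apply: h; last exact: hcut.
    apply/subsetP => s sS; rewrite !inE.
    rewrite (_ : s \in A = true); last by case/in_set4: sS => ->.
    by rewrite andbT; apply/eqP => esw; subst s; rewrite sS in wS.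
  by move=> h'; move: wA; rewrite -{1}h' !inE eqxx.
have D := fun a b c w h1 h2 h3 h4 h5 h6 => @deg A a b c w (hcut w h1) h2 h3 h4 h5 h6.
have d1_23 : e x1 x2 || e x1 x3 by degi D Asub x4.
have d1_24 : e x1 x2 || e x1 x4 by degi D Asub x3.
have d1_34 : e x1 x3 || e x1 x4 by degi D Asub x2.
have d2_13 : e x1 x2 || e x2 x3 by rewrite (e_sym x1 x2); degi D Asub x4.
have d2_14 : e x1 x2 || e x2 x4 by rewrite (e_sym x1 x2); degi D Asub x3.
have d2_34 : e x2 x3 || e x2 x4 by degi D Asub x1.
have d3_12 : e x1 x3 || e x2 x3 by rewrite (e_sym x1 x3) (e_sym x2 x3); degi D Asub x4.
have d3_14 : e x1 x3 || e x3 x4 by rewrite (e_sym x1 x3); degi D Asub x2.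
have d3_24 : e x2 x3 || e x3 x4 by rewrite (e_sym x2 x3); degi D Asub x1.
have d4_12 : e x1 x4 || e x2 x4 by rewrite (e_sym x1 x4) (e_sym x2 x4); degi D Asub x3.
have d4_13 : e x1 x4 || e x3 x4 by rewrite (e_sym x1 x4) (e_sym x3 x4); degi D Asub x2.
have d4_23 : e x2 x4 || e x3 x4 by rewrite (e_sym x2 x4) (e_sym x3 x4); degi D Asub x1.
have D12 : dist_in e A x1 x2 = dd (e x1 x2).
  apply: (dist12 (c := x3)) => // n; move: d1_23 d2_13; rewrite (negbTE n) ?orFb ?orbF => -> h.
  by rewrite e_sym.
have D34 : dist_in e A x3 x4 = dd (e x3 x4).
  apply: (dist12 (c := x1)) => // n; move: d3_14 d4_13; rewrite (negbTE n) ?orFb ?orbF => h1 h2.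
  by rewrite e_sym h1 h2.
have D13 : dist_in e A x1 x3 = dd (e x1 x3).
  apply: (dist12 (c := x2)) => // n; move: d1_23 d3_12; rewrite (negbTE n) ?orFb ?orbF => -> ->.
  by [].
have D24 : dist_in e A x2 x4 = dd (e x2 x4).
  apply: (dist12 (c := x1)) => // n; move: d2_14 d4_12; rewrite (negbTE n) ?orFb ?orbF => h1 h2.
  by rewrite e_sym h1 h2.
have D14 : dist_in e A x1 x4 = dd (e x1 x4).
  apply: (dist12 (c := x2)) => // n; move: d1_24 d4_12; rewrite (negbTE n) ?orFb ?orbF => -> ->.
  by [].
have D23 : dist_in e A x2 x3 = dd (e x2 x3).
  apply: (dist12 (c := x1)) => // n; move: d2_13 d3_12; rewrite (negbTE n) ?orFb ?orbF => h1 h2.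
  by rewrite e_sym h1 h2.
rewrite D12 D34 D13 D24 D14 D23; apply: base_bool.
- by rewrite d1_23 d1_24 d1_34 d2_13 d2_14 d2_34 d3_12 d3_14 d3_24 d4_12 d4_13 d4_23.
- apply/negP => /andP [/andP [/andP [/andP [/andP [h12 h23] h34] h14] m13] m24].
  by apply: (hC4 n13 n24 h12 h23 h34 _ m13 m24); rewrite e_sym.
- apply/negP => /andP [/andP [/andP [/andP [/andP [h13 h23] h24] h14] m12] m34].
  by apply: (hC4 n12 n34 h13 _ h24 _ m12 m34); rewrite e_sym.
- apply/negP => /andP [/andP [/andP [/andP [/andP [h12 h24] h34] h13] m14] m23].
  by apply: (hC4 n14 n23 h12 h24 _ _ m14 m23); rewrite e_sym.
Qed.
End Main.

Ltac transfer s12 s13 s14 s23 s24 s34 := let H := fresh in move=> H; move: H s12 s13 s14 s23 s24 s34; rewrite /PP;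
  clear; move=> H ? ? ? ? ? ?; case: H => -[? ?]; solve_condN.
Ltac subS := apply/subsetP => ? /in_set4 [] ->; apply: in_set4r;
  first [by constructor 1 | by constructor 2 | by constructor 3 | by constructor 4].

Section Core2.
Variables (T : finType) (e : rel T).
Hypothesis e_sym : symmetric e.
Hypothesis e_irr : irreflexive e.
Hypothesis hC4 : noC4 e.

Lemma core n : forall (A : {set T}) x1 x2 x3 x4, #|A| <= n -> connset e A ->
  x1 \in A -> x2 \in A -> x3 \in A -> x4 \in A -> Mprop e A [set x1; x2; x3; x4] ->
  PP e A x1 x2 x3 x4.
Proof.
elim: n => [|n IHn] A x1 x2 x3 x4 hn hA a1 a2 a3 a4 M.
  by move: hn; rewrite leqn0 => /eqP/cards0_eq h; rewrite h inE in a1.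
have IH : forall (A' : {set T}) z1 z2 z3 z4, #|A'| < #|A| -> connset e A' -> z1 \in A' ->
    z2 \in A' -> z3 \in A' -> z4 \in A' -> Mprop e A' [set z1; z2; z3; z4] -> PP e A' z1 z2 z3 z4.
  move=> A' z1 z2 z3 z4 h; apply: IHn; rewrite -ltnS; exact: leq_trans h hn.
have SA : [set x1; x2; x3; x4] \subset A.
  by apply/subsetP => ? /in_set4 [] ->.
case: (boolP [exists v in A, exists y in A :\ v, exists z in A :\ v,
               ~~ connect (rel_in e (A :\ v)) y z]); last first.
  move/existsPn => hnc; apply: (base e_sym e_irr hC4) => // w wA y z hy hz.
  move: (hnc w); rewrite wA /= => /existsPn /(_ y); rewrite hy /= => /existsPn /(_ z).
  by rewrite hz /= negbK.
case/existsP => v /andP [vA /existsP [y /andP [yA /existsP [z /andP [zA nc]]]]].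
set C := comp e A v y.
have Cl : closedC e A v C := @comp_closed _ _ A v y.
have CA : C \subset A by apply: comp_sub.
have vC : v \notin C by apply: comp_v.
have Cc : connset e C by apply: (comp_conn e_sym).
have yC : y \in C by apply: comp_x.
have zC : z \notin C by rewrite /C /comp inE zA.
have zAv := zA.
have ADD : forall a b, a \in C -> b \notin C -> b \in A ->
    dist_in e A a b = dist_in e A a v + dist_in e A v b.
  move=> a b ha hb hb'; apply: (dist_add Cl ha hb); apply: hA => //; exact: (subsetP CA).
have notC' : forall a b, b \in A :\ v -> b \notin C -> a \in C -> a \notin comp e A v b.
  move=> a b hb hbC haC; apply/negP => hab; move/negP: hbC; apply.
  exact: (comp_disj e_sym hb haC hab).
have noT : forall w, w \in A :\ v -> x1 \notin comp e A v w -> x2 \notin comp e A v w ->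
    x3 \notin comp e A v w -> x4 \notin comp e A v w -> False.
  move=> w hw h1 h2 h3 h4; apply: (comp_term e_sym M hA SA hw).
  by move=> s /in_set4 [] ->.
have s12 := dist_sym e_sym A x1 x2. have s13 := dist_sym e_sym A x1 x3.
have s14 := dist_sym e_sym A x1 x4. have s23 := dist_sym e_sym A x2 x3.
have s24 := dist_sym e_sym A x2 x4. have s34 := dist_sym e_sym A x3 x4.
have s1v := dist_sym e_sym A x1 v. have s2v := dist_sym e_sym A x2 v.
have s3v := dist_sym e_sym A x3 v. have s4v := dist_sym e_sym A x4 v.
have t12 := dist_tri e A x1 v x2. have t13 := dist_tri e A x1 v x3.
have t14 := dist_tri e A x1 v x4. have t23 := dist_tri e A x2 v x3.
have t24 := dist_tri e A x2 v x4. have t34 := dist_tri e A x3 v x4.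
have cv : forall w, v \notin comp e A v w by move=> w; apply: comp_v.
have cs : forall w, comp e A v w \subset A by move=> w; apply: comp_sub.
have cc : forall w, connset e (comp e A v w) by move=> w; apply: (comp_conn e_sym).
have ccl : forall w, closedC e A v (comp e A v w) by move=> w; exact: (@comp_closed _ _ A v w).
have cx : forall w, w \in A :\ v -> w \in comp e A v w by move=> w hw; apply: comp_x.
have RS := fun x => @reduce_step T e e_sym A C v x.
have RD := fun w (hw : w \in A :\ v) x => @reduce_step T e e_sym A (comp e A v w) v x.
case: (boolP (x1 \in C)) => h1; case: (boolP (x2 \in C)) => h2;
  case: (boolP (x3 \in C)) => h3; case: (boolP (x4 \in C)) => h4.
- exfalso; apply: (noT z zA); exact: notC'.
- case: (eqVneq x4 v) => [ev|nv].
    exfalso; apply: (noT z zA (notC' x1 z zA zC h1) (notC' x2 z zA zC h2) (notC' x3 z zA zC h3) _); by rewrite ev comp_v.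
  have hjv : x4 \in A :\ v by rewrite !inE nv a4.
  have := reduce_step e_sym IH hA vA (cv _) (cs _) (ccl x4)
    (cc _) (cx _ hjv) (notC' x1 x4 hjv h4 h1) (notC' x2 x4 hjv h4 h2) (notC' x3 x4 hjv h4 h3) a1 a2 a3 (Mprop_sup M _); move=> HH; move: {HH}(HH ltac:(subS)).
  transfer s12 s13 s14 s23 s24 s34.
- case: (eqVneq x3 v) => [ev|nv].
    exfalso; apply: (noT z zA (notC' x1 z zA zC h1) (notC' x2 z zA zC h2) _ (notC' x4 z zA zC h4)); by rewrite ev comp_v.
  have hjv : x3 \in A :\ v by rewrite !inE nv a3.
  have := reduce_step e_sym IH hA vA (cv _) (cs _) (ccl x3)
    (cc _) (cx _ hjv) (notC' x1 x3 hjv h3 h1) (notC' x2 x3 hjv h3 h2) (notC' x4 x3 hjv h3 h4) a1 a2 a4 (Mprop_sup M _); move=> HH; move: {HH}(HH ltac:(subS)).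
  transfer s12 s13 s14 s23 s24 s34.
- move: (ADD x1 x3 h1 h3 a3) (ADD x1 x4 h1 h4 a4) (ADD x2 x3 h2 h3 a3) (ADD x2 x4 h2 h4 a4) s12 s13 s14 s23 s24 s34 s1v s2v s3v s4v t12 t13 t14 t23 t24 t34; rewrite /PP; clear; intros.
  solve_condN.
- case: (eqVneq x2 v) => [ev|nv].
    exfalso; apply: (noT z zA (notC' x1 z zA zC h1) _ (notC' x3 z zA zC h3) (notC' x4 z zA zC h4)); by rewrite ev comp_v.
  have hjv : x2 \in A :\ v by rewrite !inE nv a2.
  have := reduce_step e_sym IH hA vA (cv _) (cs _) (ccl x2)
    (cc _) (cx _ hjv) (notC' x1 x2 hjv h2 h1) (notC' x3 x2 hjv h2 h3) (notC' x4 x2 hjv h2 h4) a1 a3 a4 (Mprop_sup M _); move=> HH; move: {HH}(HH ltac:(subS)).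
  transfer s12 s13 s14 s23 s24 s34.
- move: (ADD x1 x2 h1 h2 a2) (ADD x1 x4 h1 h4 a4) (ADD x3 x2 h3 h2 a2) (ADD x3 x4 h3 h4 a4) s12 s13 s14 s23 s24 s34 s1v s2v s3v s4v t12 t13 t14 t23 t24 t34; rewrite /PP; clear; intros.
  solve_condN.
- move: (ADD x1 x2 h1 h2 a2) (ADD x1 x3 h1 h3 a3) (ADD x4 x2 h4 h2 a2) (ADD x4 x3 h4 h3 a3) s12 s13 s14 s23 s24 s34 s1v s2v s3v s4v t12 t13 t14 t23 t24 t34; rewrite /PP; clear; intros.
  solve_condN.
- have := reduce_step e_sym IH hA vA vC CA Cl Cc h1 h2 h3 h4 a2 a3 a4 (Mprop_sup M _); move=> HH; move: {HH}(HH ltac:(subS)).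
  transfer s12 s13 s14 s23 s24 s34.
- case: (eqVneq x1 v) => [ev|nv].
    exfalso; apply: (noT z zA _ (notC' x2 z zA zC h2) (notC' x3 z zA zC h3) (notC' x4 z zA zC h4)); by rewrite ev comp_v.
  have hjv : x1 \in A :\ v by rewrite !inE nv a1.
  have := reduce_step e_sym IH hA vA (cv _) (cs _) (ccl x1)
    (cc _) (cx _ hjv) (notC' x2 x1 hjv h1 h2) (notC' x3 x1 hjv h1 h3) (notC' x4 x1 hjv h1 h4) a2 a3 a4 (Mprop_sup M _); move=> HH; move: {HH}(HH ltac:(subS)).
  transfer s12 s13 s14 s23 s24 s34.
- move: (ADD x2 x1 h2 h1 a1) (ADD x2 x4 h2 h4 a4) (ADD x3 x1 h3 h1 a1) (ADD x3 x4 h3 h4 a4) s12 s13 s14 s23 s24 s34 s1v s2v s3v s4v t12 t13 t14 t23 t24 t34; rewrite /PP; clear; intros.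
  solve_condN.
- move: (ADD x2 x1 h2 h1 a1) (ADD x2 x3 h2 h3 a3) (ADD x4 x1 h4 h1 a1) (ADD x4 x3 h4 h3 a3) s12 s13 s14 s23 s24 s34 s1v s2v s3v s4v t12 t13 t14 t23 t24 t34; rewrite /PP; clear; intros.
  solve_condN.
- have := reduce_step e_sym IH hA vA vC CA Cl Cc h2 h1 h3 h4 a1 a3 a4 (Mprop_sup M _); move=> HH; move: {HH}(HH ltac:(subS)).
  transfer s12 s13 s14 s23 s24 s34.
- move: (ADD x3 x1 h3 h1 a1) (ADD x3 x2 h3 h2 a2) (ADD x4 x1 h4 h1 a1) (ADD x4 x2 h4 h2 a2) s12 s13 s14 s23 s24 s34 s1v s2v s3v s4v t12 t13 t14 t23 t24 t34; rewrite /PP; clear; intros.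
  solve_condN.
- have := reduce_step e_sym IH hA vA vC CA Cl Cc h3 h1 h2 h4 a1 a2 a4 (Mprop_sup M _); move=> HH; move: {HH}(HH ltac:(subS)).
  transfer s12 s13 s14 s23 s24 s34.
- have := reduce_step e_sym IH hA vA vC CA Cl Cc h4 h1 h2 h3 a1 a2 a3 (Mprop_sup M _); move=> HH; move: {HH}(HH ltac:(subS)).
  transfer s12 s13 s14 s23 s24 s34.
- exfalso; exact: (noT y yA h1 h2 h3 h4).
Qed.
End Core2.

Lemma ord4_cases (i : 'I_4) : [\/ i = o1, i = o2, i = o3 | i = o4].
Proof.
case: i => [[|[|[|[|m]]]] hm] //.
- by constructor 1; apply: val_inj.
- by constructor 2; apply: val_inj.
- by constructor 3; apply: val_inj.
- by constructor 4; apply: val_inj.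
Qed.

Lemma holed_noC4 (T : finType) (e : rel T) (l : nat) : symmetric e -> irreflexive e -> 5 <= l ->
  holed e l -> noC4 e.
Proof.
move=> es ei hl Gh x y z w xz yw exy eyz ezw ewx nxz nyw.
have hx : [:: x; y; z; w] \in [:: [:: x; y; z; w]] by rewrite inE.
have nxy : x != y by apply/eqP => h; rewrite h ei in exy.
have nyz : y != z by apply/eqP => h; rewrite h ei in eyz.
have nzw : z != w by apply/eqP => h; rewrite h ei in ezw.
have nwx : w != x by apply/eqP => h; rewrite h ei in ewx.
have hh : is_hole e [:: x; y; z; w].
  exists x; split; first by rewrite inE eqxx.
  split => //.
  - rewrite /= !inE !negb_or nxy xz (eq_sym x w) nwx nyz yw nzw /=.
    by [].
  - have eyx : e y x by rewrite es.
    have ezy : e z y by rewrite es.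
    have ewz : e w z by rewrite es.
    have exw : e x w by rewrite es.
    have nzx : ~~ e z x by rewrite es.
    have nwy : ~~ e w y by rewrite es.
    move=> [|[|[|[|i]]]] [|[|[|[|j]]]] //= _ _;
    by rewrite ?ei ?exy ?eyz ?ezw ?ewx ?eyx ?ezy ?ewz ?exw ?(negbTE nxz) ?(negbTE nyw)
       ?(negbTE nzx) ?(negbTE nwy).
have := Gh _ hh => /= h4; by rewrite -h4 in hl.
Qed.

Lemma gate_M (T : finType) (e : rel T) (A B : {set T}) (P : 'I_4 -> {set T}) (a b : 'I_4 -> T) :
  gate e A B P a b -> Mprop e A [set a o1; a o2; a o3; a o4].
Proof.
case=> [[[hdisj hAc hBc hP hPP] [nb1 nb2 hU]] hnot] A' sA' sS hc.
have aA' : forall i, a i \in A'.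
  move=> i; apply: (subsetP sS); apply: in_set4r.
  by case: (ord4_cases i) => ->; [constructor 1|constructor 2|constructor 3|constructor 4].
apply/eqP; apply/negPn/negP => hne; apply: hnot.
exists A', B, P; split; last by split; [exact: sA' | exact: subxx | move=> i; exact: subxx | left].
exists a, b; split; split => //.
- exact: disjointWl sA' hdisj.
- split; last by move=> x y hx hy; apply: hc.
  by apply/set0Pn; exists (a o1).
- move=> i; have [hp [hpa hpb]] := hP i; split => //; split => //.
  apply/setP => x; rewrite !inE; move/setP/(_ x): hpa; rewrite !inE.
  case: (eqVneq x (a i)) => [->|nx]; first by rewrite aA' andbT => /andP [].
  move=> h; apply/negbTE/negP => /andP [xP xA']; move: h.
  by rewrite xP (subsetP sA' _ xA').
- move=> x xA'; apply: nb1; exact: (subsetP sA').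
- move=> y yB; apply: leq_trans (nb2 y yB); apply: subset_leq_card.
  by apply/subsetP => x; rewrite !inE => /andP [/(subsetP sA') -> ->].
- move=> U u v hu hv huv.
  have inU : forall x, x \in U -> x \in A :|: B :|: \bigcup_i P i.
    move=> x; rewrite !inE => /orP [/orP [/(subsetP sA') -> //|-> //]|->]; by rewrite !orbT.
  have toA' : forall x, x \in U -> x \in A -> x \in A'.
    move=> x; rewrite !inE => /orP [/orP [-> //|xB]|/bigcupP [i _ xP]] xA.
      by move: hdisj; rewrite disjoint_sym => /disjointFr/(_ xB); rewrite xA.
    have [_ [hpa _]] := hP i.
    have hx : x \in [set a i] by rewrite -hpa inE xP xA.
    by rewrite inE in hx; rewrite (eqP hx); exact: aA'.
  case: (hU u v (inU _ hu) (inU _ hv) huv) => [[uA vA]|[uB vB]|h]; last by constructor 3.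
    by constructor 1; split; apply: toA'.
  by constructor 2.
Qed.

Theorem mainTheorem7 (T : finType) (e : rel T) (l : nat)
  (e_sym : symmetric e) (e_irr : irreflexive e) (hl : 5 <= l)
  (Gholed : holed e l)
  (A B : {set T}) (P : 'I_4 -> {set T}) (a b : 'I_4 -> T)
  (Hgate : gate e A B P a b) :
  let d1234 := dist_in e A (a o1) (a o2) + dist_in e A (a o3) (a o4) in
  let d1324 := dist_in e A (a o1) (a o3) + dist_in e A (a o2) (a o4) in
  let d1423 := dist_in e A (a o1) (a o4) + dist_in e A (a o2) (a o3) in
  [\/ d1234 = d1324 /\ d1423 <= d1234 + 1,
      d1234 = d1423 /\ d1324 <= d1234 + 1 |
      d1324 = d1423 /\ d1234 <= d1324 + 1].
Proof.
have M := gate_M Hgate.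
case: Hgate => [[[_ hAc _ hP _] _] _].
have aA : forall i, a i \in A.
  move=> i; have [_ [/setP/(_ (a i)) h _]] := hP i; move: h; rewrite !inE eqxx.
  by case/andP.
have hA : connset e A by move=> x y hx hy; apply: hAc.2.
exact: (core e_sym e_irr (holed_noC4 e_sym e_irr hl Gholed) (leqnn #|A|) hA (aA _) (aA _) (aA _) (aA _) M).
Qed.
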